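(* Let $n\ge2$ be an integer and $\lambda>0$, and let $\gamma(t)=(\omega(t),x(t),y(t))$, $t\in(S,T)$ the maximal interval of existence, be a solution with $\omega>0$ of the system $$\frac{d\omega}{dt}=x\omega,\qquad \frac{dx}{dt}=x^2-xy+n-1-\lambda\omega^2,\qquad \frac{dy}{dt}=xy-nx^2-\lambda\omega^2,$$ such that $\int_{t_0}^T\omega(\sigma)\,d\sigma=\infty$ for every $t_0\in(S,T)$. Then $\limsup_{t\to T}x(t)\ge 0$. *)

(* Defs.v *)
From Stdlib Require Import Reals.
From Coquelicot Require Import Coquelicot.
Open Scope R_scope.

Definition in_oint (a b : Rbar) (t : R) : Prop := Rbar_lt a t /\ Rbar_lt t b.

Definition is_solution (n : nat) (lambda : R) (a b : Rbar)
  (w x y : R -> R) : Prop :=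
  forall t, in_oint a b t ->
    is_derive w t (x t * w t) /\
    is_derive x t (x t ^ 2 - x t * y t + INR n - 1 - lambda * w t ^ 2) /\
    is_derive y t (x t * y t - INR n * x t ^ 2 - lambda * w t ^ 2).

Definition maximal_solution (n : nat) (lambda : R) (S T : Rbar)
  (w x y : R -> R) : Prop :=
  Rbar_lt S T /\ is_solution n lambda S T w x y /\
  forall (S' T' : Rbar) (w' x' y' : R -> R),
    Rbar_le S' S -> Rbar_le T T' ->
    is_solution n lambda S' T' w' x' y' ->
    (forall t, in_oint S T t -> w' t = w t /\ x' t = x t /\ y' t = y t) ->
    S' = S /\ T' = T.

Definition integral_to_T_infinite (T : Rbar) (w : R -> R) (t0 : R) : Prop :=
  forall M : R, exists s0 : R, Rbar_lt s0 T /\ t0 <= s0 /\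
    forall s : R, s0 <= s -> Rbar_lt s T -> M < RInt w t0 s.

Definition limsup_at_T_nonneg (T : Rbar) (f : R -> R) : Prop :=
  forall eps : R, 0 < eps -> forall s0 : R, Rbar_lt s0 T ->
    exists t : R, s0 < t /\ Rbar_lt t T /\ - eps < f t.

(* Main.v *)
Require Import Defs.
From Stdlib Require Import Reals Lra Classical.
From Coquelicot Require Import Coquelicot.
Open Scope R_scope.

Lemma pick_in (S T : Rbar) : Rbar_lt S T -> exists t, in_oint S T t.
Proof.
  unfold in_oint; destruct S as [a| |], T as [b| |]; simpl; intros H; try tauto.
  - exists ((a+b)/2); simpl; lra.
  - exists (a+1); simpl; lra.
  - exists (b-1); simpl; lra.
  - exists 0; simpl; tauto.
Qed.

Theorem lemma3p6 (n : nat) (lambda : R) (S T : Rbar) (w x y : R -> R) :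
  (2 <= n)%nat -> 0 < lambda ->
  maximal_solution n lambda S T w x y ->
  (forall t, in_oint S T t -> 0 < w t) ->
  (forall t0, in_oint S T t0 -> integral_to_T_infinite T w t0) ->
  limsup_at_T_nonneg T x.
Proof.
  intros _ _ [HST [Hsol _]] Hw Hint.
  unfold limsup_at_T_nonneg.
  apply NNPP; intro Hn.
  apply not_all_ex_not in Hn as [eps Hn].
  apply imply_to_and in Hn as [Heps Hn].
  apply not_all_ex_not in Hn as [s0 Hn].
  apply imply_to_and in Hn as [Hs0 Hn].
  assert (Hx : forall t, s0 < t -> Rbar_lt t T -> x t <= - eps).
  { intros t H1 H2. destruct (Rle_dec (x t) (- eps)) as [h|h]; auto.
    exfalso; apply Hn; exists t; repeat split; auto; lra. }
  clear Hn.
  destruct (pick_in S T HST) as [t0 [Ht0a Ht0b]].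
  set (t1 := Rmax t0 s0).
  assert (Ht1 : in_oint S T t1).
  { unfold t1; split.
    - apply Rbar_lt_le_trans with (Finite t0); auto. simpl; apply Rmax_l.
    - unfold Rmax; destruct (Rle_dec t0 s0); auto. }
  destruct (Hint t1 Ht1 (w t1 / eps)) as [s1 [Hs1T [Hs1t Hs]]].
  specialize (Hs s1 (Rle_refl _) Hs1T).
  assert (Hin : forall u, t1 <= u <= s1 -> in_oint S T u).
  { intros u [h1 h2]; split.
    - apply Rbar_lt_le_trans with (Finite t1); [apply Ht1| simpl; lra].
    - apply Rbar_le_lt_trans with (Finite s1); [simpl; lra | exact Hs1T]. }
  assert (Hmm : forall u, Rmin t1 s1 <= u <= Rmax t1 s1 -> t1 <= u <= s1).
  { intros u; rewrite Rmin_left, Rmax_right; auto. }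
  assert (Hcw : forall u, t1 <= u <= s1 -> continuous w u).
  { intros u hu. apply (ex_derive_continuous (K:=R_AbsRing) (V:=R_NormedModule)). exists (x u * w u); exact (proj1 (Hsol u (Hin u hu))). }
  assert (Hcx : forall u, t1 <= u <= s1 -> continuous x u).
  { intros u hu. apply (ex_derive_continuous (K:=R_AbsRing) (V:=R_NormedModule)). eexists; exact (proj1 (proj2 (Hsol u (Hin u hu)))). }
  assert (Hd : is_RInt (fun u => x u * w u) t1 s1 (minus (w s1) (w t1))).
  { apply (is_RInt_derive (V:=R_CompleteNormedModule) w).
    - intros u hu; apply (Hsol u (Hin u (Hmm u hu))).
    - intros u hu. apply (continuous_mult (K:=R_AbsRing) x w); [apply Hcx|apply Hcw]; auto. }
  apply (is_RInt_scal _ _ _ (- / eps)) in Hd.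
  assert (Hd' : is_RInt (V:=R_CompleteNormedModule) (fun u => - / eps * (x u * w u)) t1 s1 (- / eps * (w s1 - w t1))) by exact Hd.
  clear Hd.
  assert (Hle : RInt w t1 s1 <= RInt (fun u => - / eps * (x u * w u)) t1 s1).
  { apply RInt_le; auto.
    - apply (ex_RInt_continuous (V:=R_CompleteNormedModule)); intros; apply Hcw; auto.
    - eexists; exact Hd'.
    - intros u hu.
      assert (0 < w u) by (apply Hw, Hin; lra).
      assert (x u <= - eps) by (apply Hx; [unfold t1 in hu; pose proof (Rmax_r t0 s0); lra|
        apply Hin; lra]).
      assert (0 < / eps) by (apply Rinv_0_lt_compat; lra).
      assert (- eps * w u >= x u * w u) by nra.
      replace (w u) with (- / eps * (- eps * w u)) at 1 by (field; lra).
      nra. }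
  rewrite (is_RInt_unique (V:=R_CompleteNormedModule) _ _ _ _ Hd') in Hle.
  assert (0 < w s1) by (apply Hw, Hin; lra).
  assert (0 < / eps) by (apply Rinv_0_lt_compat; lra).
  unfold Rdiv in Hs. nra.
Qed.
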